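(* Assume $2\mu\bar c>\sigma^2 r$. There is a constant $K>0$, independent of $n$ and $i$, such that for every $n\in\mathbb N$ the solution $v_0,\dots,v_n$ of the regime-switching system satisfies $0\le v_i'\le K$ on $[0,\infty)$ for $i=0,\dots,n$.
   Context: Constants: $\mu\in\mathbb R$, $\sigma>0$, $r>0$, $\bar c\in(0,\mu]$, $b\in[0,1]$. Operators: $\mathcal L w=\tfrac12\sigma^2w''+\mu w'-rw$, $\mathcal T w=b(1-w')+(1-b)(1-w')^+$. Regime-switching system: for $n\in\mathbb N$ let $\Delta c=\bar c/n$, $c_i=\bar c-i\Delta c$ ($i=0,\dots,n$), $v_{-1}\equiv0$; find bounded functions $v_0,\dots,v_n$ on $[0,\infty)$, $v_i\in W^2_{p,\mathrm{loc}}([0,\infty))$ for all $p>1$, with $\min\{-\mathcal Lv_i-c_i\,\mathcal Tv_i,\ v_i-v_{i-1}\}=0$ a.e. on $(0,\infty)$ and $v_i(0)=0$, for $i=0,\dots,n$ (such a solution exists and is unique). *)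

(* Defs.v *)
From HB Require Import structures.
From mathcomp Require Import all_boot all_order all_algebra.
From mathcomp Require Import all_classical all_reals all_analysis.
Set Implicit Arguments. Unset Strict Implicit. Unset Printing Implicit Defensive.
Import Order.TTheory GRing.Theory Num.Theory.
Import numFieldNormedType.Exports.
Local Open Scope classical_set_scope.
Local Open Scope ring_scope.

Section Defs.
Variable R : realType.
Notation mu := (@lebesgue_measure R).

(* Sobolev regularity W^2_{p,loc}([0,oo)) for every p > 1, expressed through an
   explicit first derivative [d] (continuous) and weak second derivative [w]:
     v x = v 0 + int_0^x d,   d x = d 0 + int_0^x w   (x >= 0),
   with w measurable and locally L^p on [0,oo) for every p > 1. *)
Definition W2loc_repr (v d w : R -> R) : Prop :=
  measurable_fun [set x : R | 0 <= x] w /\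
  (forall (a p : R), 0 < a -> 1 < p ->
     (\int[mu]_(x in `[0%R, a]) ((`|w x| `^ p)%:E) < +oo)%E) /\
  (forall x : R, 0 <= x ->
     mu.-integrable `[0, x] (fun t => (w t)%:E) /\
     mu.-integrable `[0, x] (fun t => (d t)%:E) /\
     v x = v 0 + Rintegral mu `[0, x] d /\
     d x = d 0 + Rintegral mu `[0, x] w).

Definition gen_L (m sigma r : R) (v d w : R -> R) (x : R) : R :=
  2^-1 * sigma ^+ 2 * w x + m * d x - r * v x.

Definition op_T (b : R) (d : R -> R) (x : R) : R :=
  b * (1 - d x) + (1 - b) * Num.max (1 - d x) 0.

Definition cc (cbar : R) (n i : nat) : R := cbar - i%:R * (cbar / n%:R).

Definition vprev (v : nat -> R -> R) (i : nat) : R -> R :=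
  if i is i'.+1 then v i' else (fun _ => 0).

Definition solves_system (m sigma r cbar b : R) (n : nat)
    (v d w : nat -> R -> R) : Prop :=
  forall i : nat, (i <= n)%N ->
    W2loc_repr (v i) (d i) (w i) /\
    (exists M : R, forall x : R, 0 <= x -> `|v i x| <= M) /\
    v i 0 = 0 /\
    {ae mu, forall x : R, 0 < x ->
       Num.min (- gen_L m sigma r (v i) (d i) (w i) x
                - cc cbar n i * op_T b (d i) x)
               (v i x - vprev v i x) = 0}.

End Defs.

(* Main.v *)
Require Import Defs.
From HB Require Import structures.
From mathcomp Require Import all_boot all_order all_algebra.
From mathcomp Require Import all_classical all_reals all_analysis.
From mathcomp Require Import ring lra.
Set Implicit Arguments. Unset Strict Implicit. Unset Printing Implicit Defensive.
Import Order.TTheory GRing.Theory Num.Theory.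
Import numFieldNormedType.Exports.
Local Open Scope classical_set_scope.
Local Open Scope ring_scope.

Section Core.
Variable R : realType.

Lemma cont_nbhs_lt (k : R -> R) z (L : R) : {for z, continuous k} -> k z < L ->
  exists2 d, 0 < d & forall y, `|y - z| < d -> k y < L.
Proof.
move=> kc kL.
move: (kc) => /cvgr_dist_lt /(_ (L - k z)); rewrite subr_gt0 => /(_ kL).
move=> /nbhs_normP[d /= d0 H]; exists d => // y yz.
have := H y; rewrite /ball_ /= distrC => /(_ yz) h.
move: h; rewrite ltr_norml => /andP[h1 h2]; lra.
Qed.


Lemma cont_nbhs_gt (k : R -> R) z (L : R) : {for z, continuous k} -> L < k z ->
  exists2 d, 0 < d & forall y, `|y - z| < d -> L < k y.
Proof.
move=> kc kL.
have kc' : {for z, continuous (fun x => - k x)} by apply: continuousN.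
have [d d0 H] := cont_nbhs_lt kc' (L := - L) ltac:(by rewrite ltrN2).
by exists d => // y /H; rewrite ltrN2.
Qed.

Lemma wc_of_der (k dk : R -> R) (a b : R) :
  (forall x, a <= x <= b -> is_derive x 1 k (dk x)) ->
  {within `[a, b], continuous k}.
Proof.
move=> H; apply: derivable_within_continuous => x; rewrite in_itv /= => /H.
by case.
Qed.

Lemma mvt_ge (f df : R -> R) (a b L : R) : a < b ->
  (forall x, a < x < b -> is_derive x 1 f (df x)) ->
  {within `[a, b], continuous f} ->
  (forall x, a < x < b -> L <= df x) -> f a + L * (b - a) <= f b.
Proof.
move=> ab D C H.
have [c c1 c2] := MVT ab (fun x hx => D x ltac:(by move: hx; rewrite in_itv)) C.
have : L * (b - a) <= df c * (b - a).
  by apply: ler_wpM2r; [rewrite subr_ge0 ltW | apply: H; move: c1; rewrite in_itv].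
lra.
Qed.

Lemma mvt_gt (f df : R -> R) (a b L : R) : a < b ->
  (forall x, a < x < b -> is_derive x 1 f (df x)) ->
  {within `[a, b], continuous f} ->
  (forall x, a < x < b -> L < df x) -> f a + L * (b - a) < f b.
Proof.
move=> ab D C H.
have [c c1 c2] := MVT ab (fun x hx => D x ltac:(by move: hx; rewrite in_itv)) C.
have : L * (b - a) < df c * (b - a).
  by rewrite ltr_pM2r ?subr_gt0 //; apply: H; move: c1; rewrite in_itv.
lra.
Qed.

Lemma mvt_le (f df : R -> R) (a b U : R) : a < b ->
  (forall x, a < x < b -> is_derive x 1 f (df x)) ->
  {within `[a, b], continuous f} ->
  (forall x, a < x < b -> df x <= U) -> f b <= f a + U * (b - a).
Proof.
move=> ab D C H.
have [c c1 c2] := MVT ab (fun x hx => D x ltac:(by move: hx; rewrite in_itv)) C.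
have : df c * (b - a) <= U * (b - a).
  by apply: ler_wpM2r; [rewrite subr_ge0 ltW | apply: H; move: c1; rewrite in_itv].
lra.
Qed.

Lemma mvt_lt (f df : R -> R) (a b U : R) : a < b ->
  (forall x, a < x < b -> is_derive x 1 f (df x)) ->
  {within `[a, b], continuous f} ->
  (forall x, a < x < b -> df x < U) -> f b < f a + U * (b - a).
Proof.
move=> ab D C H.
have [c c1 c2] := MVT ab (fun x hx => D x ltac:(by move: hx; rewrite in_itv)) C.
have : df c * (b - a) < U * (b - a).
  by rewrite ltr_pM2r ?subr_gt0 //; apply: H; move: c1; rewrite in_itv.
lra.
Qed.

Lemma loc_pos (k dk : R -> R) (z d : R) : 0 < d ->
  (forall y, `|y - z| < d -> is_derive y 1 k (dk y)) ->
  {for z, continuous dk} -> 0 < dk z ->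
  exists e : R, [/\ 0 < e,
    (forall y, z < y < z + e -> k z < k y) &
    (forall y, z - e < y < z -> k y < k z)].
Proof.
move=> d0 D C pos.
have [d' d'0 H] := cont_nbhs_gt C pos.
have e0 : 0 < Num.min d d' by rewrite lt_min d0 d'0.
have hd : forall y, `|y - z| < Num.min d d' -> `|y - z| < d /\ `|y - z| < d'.
  by move=> y; rewrite lt_min => /andP[].
have near_in : forall a b y, z - Num.min d d' < a -> b < z + Num.min d d' ->
    a <= y -> y <= b -> `|y - z| < d /\ `|y - z| < d'.
  move=> a b y h1 h2 h3 h4; apply: hd; rewrite ltr_norml; apply/andP; split; lra.
exists (Num.min d d'); split => //.
- move=> y /andP[zy yz].
  have := @mvt_gt k dk z y 0 zy.
  rewrite mul0r addr0; apply.
  + move=> x /andP[h1 h2]; apply: D; apply: (proj1 (near_in z y x _ _ _ _)); lra.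
  + apply: wc_of_der => x /andP[h1 h2]; apply: D; apply: (proj1 (near_in z y x _ _ _ _)); lra.
  + move=> x /andP[h1 h2]; apply: H; apply: (proj2 (near_in z y x _ _ _ _)); lra.
- move=> y /andP[zy yz].
  have := @mvt_gt k dk y z 0 yz.
  rewrite mul0r addr0; apply.
  + move=> x /andP[h1 h2]; apply: D; apply: (proj1 (near_in y z x _ _ _ _)); lra.
  + apply: wc_of_der => x /andP[h1 h2]; apply: D; apply: (proj1 (near_in y z x _ _ _ _)); lra.
  + move=> x /andP[h1 h2]; apply: H; apply: (proj2 (near_in y z x _ _ _ _)); lra.
Qed.


Lemma loc_neg (k dk : R -> R) (z d : R) : 0 < d ->
  (forall y, `|y - z| < d -> is_derive y 1 k (dk y)) ->
  {for z, continuous dk} -> dk z < 0 ->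
  exists e : R, [/\ 0 < e,
    (forall y, z < y < z + e -> k y < k z) &
    (forall y, z - e < y < z -> k z < k y)].
Proof.
move=> d0 D C neg.
have D' : forall y, `|y - z| < d -> is_derive y 1 (fun x => - k x) (- dk y).
  by move=> y /D h; apply: is_deriveN.
have C' : {for z, continuous (fun x => - dk x)} by apply: continuousN.
have [e [e0 H1 H2]] := loc_pos d0 D' C' ltac:(by rewrite oppr_gt0).
exists e; split => // y /[dup] hy.
- by move/H1; rewrite ltrN2.
- by move/H2; rewrite ltrN2.
Qed.

Lemma fermat_min (k dk : R -> R) (z d : R) : 0 < d ->
  (forall y, `|y - z| < d -> is_derive y 1 k (dk y)) ->
  {for z, continuous dk} -> (forall y, `|y - z| < d -> k z <= k y) -> dk z = 0.
Proof.
move=> d0 D C M.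
have hz : forall e, 0 < e -> `|(z + Num.min e d / 2) - z| < d /\ `|(z - Num.min e d / 2) - z| < d.
  move=> e e0; have m0 : 0 < Num.min e d by rewrite lt_min e0 d0.
  have md : Num.min e d <= d by rewrite ge_min lexx orbT.
  by split; rewrite ltr_norml; apply/andP; split; lra.
have [neg|pos|//] := ltrgtP (dk z) 0.
- have [e [e0 H1 _]] := loc_neg d0 D C neg.
  have m0 : 0 < Num.min e d by rewrite lt_min e0 d0.
  have me : Num.min e d <= e by rewrite ge_min lexx.
  have := H1 (z + Num.min e d / 2) ltac:(apply/andP; split; lra).
  have := M _ (hz e e0).1; lra.
- have [e [e0 _ H2]] := loc_pos d0 D C pos.
  have m0 : 0 < Num.min e d by rewrite lt_min e0 d0.
  have me : Num.min e d <= e by rewrite ge_min lexx.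
  have := H2 (z - Num.min e d / 2) ltac:(apply/andP; split; lra).
  have := M _ (hz e e0).2; lra.
Qed.


Definition Ex (la x : R) := expR (- (la * x)).

Lemma Ex_gt0 (la x : R) : 0 < Ex la x.
Proof. exact: expR_gt0. Qed.

Lemma dB (f g : R -> R) (x df dg : R) : is_derive x 1 f df -> is_derive x 1 g dg ->
  is_derive x 1 (fun y => f y - g y) (df - dg).
Proof. by move=> h1 h2; exact: (is_deriveB h1 h2). Qed.

Lemma dD (f g : R -> R) (x df dg : R) : is_derive x 1 f df -> is_derive x 1 g dg ->
  is_derive x 1 (fun y => f y + g y) (df + dg).
Proof. by move=> h1 h2; exact: (is_deriveD h1 h2). Qed.

Lemma dN (f : R -> R) (x df : R) : is_derive x 1 f df ->
  is_derive x 1 (fun y => - f y) (- df).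
Proof. by move=> h1; exact: (is_deriveN h1). Qed.

Lemma dZ (f : R -> R) (k x df : R) : is_derive x 1 f df ->
  is_derive x 1 (fun y => k * f y) (k * df).
Proof. by move=> h1; exact: (is_deriveZ k h1). Qed.

Lemma dC (k x : R) : is_derive x 1 (fun _ : R => k) 0.
Proof. exact: is_derive_cst. Qed.

Lemma dI (x : R) : is_derive x 1 (fun y : R => y) 1.
Proof. exact: is_derive_id. Qed.

Lemma der_Ex (la x : R) : is_derive x 1 (Ex la) (- la * Ex la x).
Proof.
have h1 : is_derive x 1 (fun y : R => - (la * y)) (- la).
  by have := dN (dZ la (dI x)); rewrite mulr1.
have := @is_derive1_comp _ expR (fun y : R => - (la * y)) x _ _ (is_derive_expR (- (la * x))) h1.
by rewrite /Ex mulrC; apply.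
Qed.

Lemma cont_Ex (la x : R) : {for x, continuous (Ex la)}.
Proof.
have [d _] := der_Ex la x.
by apply/differentiable_continuous; rewrite -derivable1_diffP.
Qed.


Lemma pt_cont (k : R -> R) : (forall B, 0 < B -> {within `[0, B], continuous k}) ->
  forall x, 0 < x -> {for x, continuous k}.
Proof.
move=> H x x0.
have x1 : 0 < x + 1 by lra.
have [H1 _ _] := (continuous_within_itvP k x1).1 (H _ x1).
by apply: H1; rewrite in_itv /=; apply/andP; split; lra.
Qed.

Lemma right0 (k : R -> R) : (forall B, 0 < B -> {within `[0, B], continuous k}) ->
  k @ 0^'+ --> k 0.
Proof.
move=> H.
have x1 : (0:R) < 1 by lra.
by have [_ H2 _] := (continuous_within_itvP k x1).1 (H _ x1).
Qed.

Lemma right_extract (k : R -> R) (L : R) : k @ 0^'+ --> k 0 -> k 0 < L ->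
  exists2 d, 0 < d & forall y, 0 <= y < d -> k y < L.
Proof.
move=> kc kL.
move: (kc) => /cvgr_dist_lt /(_ (L - k 0)); rewrite subr_gt0 => /(_ kL).
rewrite near_withinE => /nbhs_normP[d /= d0 H]; exists d => // y /andP[y0 yd].
move: y0; rewrite le_eqVlt => /orP[/eqP <- //|y0].
have := H y; rewrite /ball_ /= sub0r normrN ger0_norm ?(ltW y0) // => /(_ yd y0).
rewrite ltr_norml => /andP[h1 h2]; lra.
Qed.

End Core.

Lemma sub_cc {R : realType} (a b c d : R) : c <= a -> b <= d -> `[a, b] `<=` `[c, d].
Proof.
move=> ca bd y; rewrite /= !in_itv /= => /andP[h1 h2]; apply/andP; split.
- exact: le_trans ca h1.
- exact: le_trans h2 bd.
Qed.

Definition s2 {R : realType} (sigma : R) := 2^-1 * sigma ^+ 2.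
Definition la {R : realType} (m sigma r : R) := 1 + (m + r) / s2 sigma.
Definition AA {R : realType} (cbar r : R) := cbar / r.
Definition V0 {R : realType} (m sigma r cbar x : R) :=
  AA cbar r * (1 - Ex (la m sigma r) x).
Definition KK {R : realType} (m sigma r cbar : R) :=
  Num.max 1 (AA cbar r * la m sigma r).
Definition hh {R : realType} (m sigma r b c : R) (f p : R -> R) (x : R) :=
  (s2 sigma)^-1 * (r * f x - m * p x - c * op_T b p x).

Section Main.
Variable R : realType.
Variables (m sigma r cbar b c : R).
Hypotheses (sig0 : 0 < sigma) (r0 : 0 < r) (cb0 : 0 < cbar) (cbm : cbar <= m)
  (b0 : 0 <= b) (b1 : b <= 1) (c0 : 0 <= c) (ccb : c <= cbar).
Variables (f p g dg : R -> R).
Hypotheses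
 (Hf' : forall x : R, 0 < x -> is_derive x 1 f (p x))
 (Hfc : forall B : R, 0 < B -> {within `[0, B], continuous f})
 (Hpc : forall B : R, 0 < B -> {within `[0, B], continuous p})
 (Hf0 : f 0 = 0)
 (Hfb : exists B, forall x : R, 0 <= x -> f x <= B)
 (Hg' : forall x : R, 0 < x -> is_derive x 1 g (dg x))
 (Hgc : forall B : R, 0 < B -> {within `[0, B], continuous g})
 (Hdgc : forall x : R, 0 < x -> {for x, continuous dg})
 (Hg0 : g 0 = 0)
 (Hgpos : forall x : R, 0 <= x -> 0 <= g x)
 (HgV : forall x : R, 0 <= x -> g x <= V0 m sigma r cbar x)
 (Hdg : forall x : R, 0 < x -> 0 <= dg x <= KK m sigma r cbar)
 (HnoNeg : forall u v : R, 0 <= u -> u < v -> (forall y, u < y < v -> f y < g y) -> False)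
 (HC : forall u v : R, 0 <= u -> u < v -> (forall y, u < y < v -> g y < f y) ->
        forall y, u < y < v -> is_derive y 1 p (hh m sigma r b c f p y)).

Local Notation h := (hh m sigma r b c f p).

Lemma m_gt0 : 0 < m. Proof. exact: lt_le_trans cb0 cbm. Qed.
Lemma mr_gt0 : 0 < m / r. Proof. by rewrite divr_gt0 // m_gt0. Qed.

Lemma s2_gt0 : 0 < s2 sigma.
Proof. by rewrite /s2 mulr_gt0 // ?invr_gt0 // exprn_gt0. Qed.

Lemma fpt (x : R) : 0 < x -> {for x, continuous f}. Proof. exact: pt_cont. Qed.
Lemma ppt (x : R) : 0 < x -> {for x, continuous p}. Proof. exact: pt_cont. Qed.
Lemma gpt (x : R) : 0 < x -> {for x, continuous g}. Proof. exact: pt_cont. Qed.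

Lemma opT_cont (q : R -> R) (x : R) : {for x, continuous q} ->
  {for x, continuous (op_T b q)}.
Proof.
move=> qc; rewrite /op_T.
have h1 : {for x, continuous (fun y => 1 - q y)}.
  by apply: continuousB => //; exact: cvg_cst.
apply: continuousD; first by apply: continuousM => //; exact: cvg_cst.
apply: continuousM; first exact: cvg_cst.
exact: (@continuous_max _ _ (fun y => 1 - q y) (cst 0) x h1 (cvg_cst _)).
Qed.

Lemma hpt (x : R) : 0 < x -> {for x, continuous h}.
Proof.
move=> x0; rewrite /hh.
apply: continuousM; first exact: cvg_cst.
apply: continuousB; first apply: continuousB.
- by apply: continuousM; [exact: cvg_cst | exact: fpt].
- by apply: continuousM; [exact: cvg_cst | exact: ppt].
- by apply: continuousM; [exact: cvg_cst | apply: opT_cont; exact: ppt].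
Qed.


Lemma kpt (x : R) : 0 < x -> {for x, continuous (fun y => f y - g y)}.
Proof. by move=> x0; apply: continuousB; [exact: fpt | exact: gpt]. Qed.

Lemma f_ge_g (x : R) : 0 <= x -> g x <= f x.
Proof.
move=> x0; move: x0; rewrite le_eqVlt => /orP[/eqP <-|x0]; first by rewrite Hf0 Hg0.
rewrite leNgt; apply/negP => fg.
have [d d0 H] := cont_nbhs_lt (L := 0) (kpt x0) ltac:(rewrite /=; lra).
have e0 : 0 < Num.min d x by rewrite lt_min d0 x0.
have ed : Num.min d x <= d by rewrite ge_min lexx.
have ex : Num.min d x <= x by rewrite ge_min lexx orbT.
apply: (HnoNeg (u := x - Num.min d x) (v := x + Num.min d x)); try lra.
move=> y /andP[h1 h2].
have : `|y - x| < d by rewrite ltr_norml; apply/andP; split; lra.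
move/H; lra.
Qed.

Lemma contact (x : R) : 0 < x -> f x = g x -> p x = dg x.
Proof.
move=> x0 fgx.
suff : p x - dg x = 0 by lra.
apply: (@fermat_min R (fun y => f y - g y) (fun y => p y - dg y) x x x0).
- move=> y yx; have y0 : 0 < y by move: yx; rewrite ltr_norml => /andP[]; lra.
  exact: dB (Hf' y0) (Hg' y0).
- by apply: continuousB; [exact: ppt | exact: Hdgc].
- move=> y yx; have y0 : 0 < y by move: yx; rewrite ltr_norml => /andP[]; lra.
  have := f_ge_g (ltW y0); lra.
Qed.

Lemma inC_nbhs (x : R) : 0 < x -> g x < f x ->
  exists d : R, [/\ 0 < d, d <= x &
    forall y, `|y - x| < d -> is_derive y 1 p (h y) /\ g y < f y].
Proof.
move=> x0 fgx.
have [d d0 H] := cont_nbhs_gt (L := 0) (kpt x0) ltac:(rewrite /=; lra).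
have e0 : 0 < Num.min d x by rewrite lt_min d0 x0.
have ed : Num.min d x <= d by rewrite ge_min lexx.
have ex : Num.min d x <= x by rewrite ge_min lexx orbT.
have HH : forall y, `|y - x| < Num.min d x -> g y < f y.
  move=> y yx; have : `|y - x| < d by lra.
  move/H; lra.
exists (Num.min d x); split => // y yx; split; last exact: HH.
apply: (HC (u := x - Num.min d x) (v := x + Num.min d x)); try lra.
- move=> z /andP[h1 h2]; apply: HH; rewrite ltr_norml; apply/andP; split; lra.
- by move: yx; rewrite ltr_norml => /andP[h1 h2]; apply/andP; split; lra.
Qed.


Lemma inC_der (y : R) : 0 < y -> g y < f y -> is_derive y 1 p (h y).
Proof.
move=> y0 gf; have [d [d0 _ H]] := inC_nbhs y0 gf.
by apply: (H y _).1; rewrite subrr normr0.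
Qed.

Lemma f_ge0 (x : R) : 0 <= x -> 0 <= f x.
Proof. by move=> x0; apply: le_trans (f_ge_g x0); exact: Hgpos. Qed.

Lemma opT_le1 (q : R -> R) (y : R) : q y <= 1 -> op_T b q y = 1 - q y.
Proof.
move=> q1; rewrite /op_T; have -> : Num.max (1 - q y) 0 = 1 - q y.
  by apply/max_idPl; lra.
ring.
Qed.

Lemma opT_ge1 (q : R -> R) (y : R) : 1 <= q y -> op_T b q y = b * (1 - q y).
Proof.
move=> q1; rewrite /op_T; have -> : Num.max (1 - q y) 0 = 0.
  by apply/max_idPr; lra.
ring.
Qed.

Lemma opT_pos_le1 (q : R -> R) (y : R) : 0 <= q y -> op_T b q y <= 1.
Proof.
move=> q0; have [q1|q1] := lerP (q y) 1.
  by rewrite opT_le1 //; lra.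
rewrite opT_ge1; last lra.
have : 0 <= b * (q y - 1) by apply: mulr_ge0 => //; lra.
lra.
Qed.

Lemma p0_ge0 : 0 <= p 0.
Proof.
rewrite leNgt; apply/negP => p0n.
have [d d0 H] := right_extract (L := 0) (right0 Hpc) p0n.
have d20 : 0 < d / 2 by rewrite divr_gt0.
have := @mvt_lt R f p 0 (d / 2) 0 d20.
have := f_ge0 (ltW d20).
rewrite Hf0 mul0r addr0 => fd H2; suff : f (d / 2) < 0 by lra.
apply: H2.
- by move=> x /andP[x0 _]; exact: Hf' x0.
- exact: Hfc.
- by move=> x /andP[x0 xd]; apply: H; apply/andP; split; lra.
Qed.

Lemma no_neg_min (z d : R) : 0 < z -> p z < 0 -> 0 < d ->
  (forall y, `|y - z| < d -> p z <= p y) -> False.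
Proof.
move=> z0 pz d0 Hmin.
have [d1 d10 H1] := cont_nbhs_lt (ppt z0) pz.
pose d2 := Num.min (Num.min d d1) z.
have d20 : 0 < d2 by rewrite /d2 !lt_min d0 d10 z0.
have d2d : d2 <= d by rewrite /d2 !ge_min lexx.
have d2d1 : d2 <= d1 by rewrite /d2 !ge_min lexx orbT.
have d2z : d2 <= z by rewrite /d2 ge_min lexx orbT.
have Hy : forall y, `|y - z| < d2 -> [/\ 0 < y, p y < 0 & p z <= p y].
  move=> y yz; split.
  - by move: yz; rewrite ltr_norml => /andP[]; lra.
  - by apply: H1; lra.
  - by apply: Hmin; lra.
have Dp : forall y, `|y - z| < d2 -> is_derive y 1 p (h y).
  move=> y /Hy[y0 py _]; apply: inC_der => //.
  rewrite lt_neqAle f_ge_g ?(ltW y0) // andbT; apply/eqP => e.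
  have := contact y0 (esym e); have := Hdg y0; lra.
have hz0 : h z = 0.
  apply: (fermat_min d20 Dp (hpt z0)) => y /Hy[_ _]; done.
pose q y := r * f y - c + (c - m) * p y.
have hq : forall y, `|y - z| < d2 -> h y = (s2 sigma)^-1 * q y.
  move=> y /Hy[_ py _]; rewrite /hh /q opT_le1; last lra.
  congr (_ * _); ring.
pose dq y := r * p y + (c - m) * h y.
have Dq : forall y, `|y - z| < d2 -> is_derive y 1 q (dq y).
  move=> y yz; have [y0 _ _] := Hy y yz.
  have := dD (dB (dZ r (Hf' y0)) (dC c y)) (dZ (c - m) (Dp y yz)).
  by rewrite /q /dq subr0.
have Cq : {for z, continuous dq}.
  apply: continuousD.
  - by apply: continuousM; [exact: cvg_cst | exact: ppt].
  - by apply: continuousM; [exact: cvg_cst | exact: hpt].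
have dqz : dq z < 0.
  by rewrite /dq hz0 mulr0 addr0 pmulr_rlt0.
have qz : q z = 0.
  have := hq z; rewrite subrr normr0 => /(_ d20); rewrite hz0 => /esym.
  move/eqP; rewrite mulf_eq0 invr_eq0 => /orP[|/eqP //].
  by move/eqP => e; have := s2_gt0; rewrite e ltxx.
have [e [e0 He _]] := loc_neg d20 Dq Cq dqz.
pose e' := Num.min e d2.
have e'0 : 0 < e' by rewrite /e' lt_min e0 d20.
have e'e : e' <= e by rewrite /e' ge_min lexx.
have e'd : e' <= d2 by rewrite /e' ge_min lexx orbT.
have e20 : z < z + e' / 2 by lra.
have := @mvt_lt R p h z (z + e' / 2) 0 e20.
have := Hmin (z + e' / 2); rewrite addrC addKr ger0_norm; last lra.
move=> /(_ ltac:(lra)) pmin; rewrite mul0r addr0 => Hm.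
suff : p (z + e' / 2) < p z by lra.
apply: Hm.
- move=> x /andP[h1 h2]; apply: Dp; rewrite ltr_norml; apply/andP; split; lra.
- apply: wc_of_der => x /andP[h1 h2]; apply: Dp; rewrite ltr_norml; apply/andP; split; lra.
- move=> x /andP[h1 h2].
  have xz : `|x - z| < d2 by rewrite ltr_norml; apply/andP; split; lra.
  rewrite hq // pmulr_rlt0 ?invr_gt0 ?s2_gt0 //.
  rewrite -qz; apply: He; apply/andP; split; lra.
Qed.


Lemma wc_sub (k : R -> R) (u v : R) : (forall B : R, 0 < B -> {within `[0, B], continuous k}) ->
  0 <= u -> 0 < v -> {within `[u, v], continuous k}.
Proof.
move=> H u0 v0; apply: (continuous_subspaceW _ (H v v0)); apply: sub_cc => //.
Qed.

Lemma p_ge0 (x0 : R) : 0 <= x0 -> 0 <= p x0.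
Proof.
move=> hx0; rewrite leNgt; apply/negP => px.
have x00 : 0 < x0.
  rewrite lt_neqAle hx0 andbT; apply/eqP => e; rewrite -e in px.
  have := p0_ge0; lra.
have run : forall X, x0 <= X -> p X <= p x0.
  move=> X xX; have X0 : 0 < X by lra.
  have [c1 c1i c1m] := EVT_min (ltW X0) (Hpc X0).
  move: c1i; rewrite in_itv /= => /andP[c10 c1X].
  have pc1 : p c1 <= p x0 by apply: c1m; rewrite in_itv /=; apply/andP; split; lra.
  have c1p : 0 < c1.
    rewrite lt_neqAle c10 andbT; apply/eqP => e; rewrite -e in pc1.
    have := p0_ge0; lra.
  have [c1X'|c1X'] := ltrP c1 X; last first.
    by have -> : X = c1 by apply/eqP; rewrite eq_le c1X'.
  exfalso.
  have m0 : 0 < Num.min c1 (X - c1) by rewrite lt_min c1p subr_gt0.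
  have m1 : Num.min c1 (X - c1) <= c1 by rewrite ge_min lexx.
  have m2 : Num.min c1 (X - c1) <= X - c1 by rewrite ge_min lexx orbT.
  apply: (no_neg_min c1p _ m0); first lra.
  move=> y; rewrite ltr_norml => /andP[h1 h2]; apply: c1m.
  rewrite in_itv /=; apply/andP; split; lra.
pose X := x0 + (f x0 + 1) / (- p x0).
have fx0 := f_ge0 hx0.
have q0 : 0 < (f x0 + 1) / (- p x0) by rewrite divr_gt0 //; lra.
have xX : x0 < X by rewrite /X; lra.
have := @mvt_le R f p x0 X (p x0) xX.
have -> : f x0 + p x0 * (X - x0) = - 1.
  by rewrite /X; field; rewrite ltr0_neq0.
have := f_ge0 (ltW (lt_trans x00 xX)).
move=> fX H; suff : f X <= -1 by lra.
apply: H.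
- by move=> x /andP[h1 _]; apply: Hf'; lra.
- by apply: wc_sub => //; lra.
- by move=> x /andP[h1 _]; apply: run; lra.
Qed.


Let L := la m sigma r.
Let A := AA cbar r.
Let E := Ex L.
Let S := s2 sigma.

Lemma L_ge1 : 1 <= L.
Proof.
rewrite /L /la; have : 0 <= (m + r) / s2 sigma.
  apply: divr_ge0; [idtac | exact: ltW s2_gt0]; have := cbm; have := cb0; have := r0; lra.
lra.
Qed.

Lemma kappa_ge0 : 0 <= S * L ^+ 2 - m * L - r.
Proof.
have SL : S * L = S + m + r.
  rewrite /S /L /la; field; apply: lt0r_neq0; exact: s2_gt0.
have -> : S * L ^+ 2 - m * L - r = L * (S * L - m) - r by ring.
rewrite SL.
have h1 := L_ge1; have h2 : 0 < S by exact: s2_gt0.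
have : (S + r) <= L * (S + m + r - m).
  have -> : S + m + r - m = S + r by ring.
  by rewrite ler_peMl //; have := r0; lra.
lra.
Qed.

Lemma A_gt0 : 0 < A. Proof. by rewrite /A /AA divr_gt0. Qed.

Lemma rA : r * A = cbar.
Proof. by rewrite /A /AA mulrC -mulrA mulVf ?mulr1 // lt0r_neq0. Qed.

Lemma Ex_le1 (x : R) : 0 <= x -> E x <= 1.
Proof.
move=> x0; rewrite /E /Ex expR_le1 oppr_le0; apply: mulr_ge0 => //.
by have := L_ge1; lra.
Qed.

Lemma E0 : E 0 = 1.
Proof. by rewrite /E /Ex mulr0 oppr0 expR0. Qed.

Lemma wc_B (k1 k2 : R -> R) (u v : R) : u < v ->
  {within `[u, v], continuous k1} -> {within `[u, v], continuous k2} ->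
  {within `[u, v], continuous (fun y => k1 y - k2 y)}.
Proof.
move=> uv /(continuous_within_itvP _ uv)[a1 a2 a3] /(continuous_within_itvP _ uv)[b1' b2 b3].
apply/(continuous_within_itvP _ uv); split.
- by move=> x xi; apply: continuousB; [exact: a1 | exact: b1'].
- exact: cvgB.
- exact: cvgB.
Qed.

Lemma opT_eq (q1 q2 : R -> R) (y : R) : q1 y = q2 y -> op_T b q1 y = op_T b q2 y.
Proof. by rewrite /op_T => ->. Qed.

Section Eps.
Variable eps : R.
Hypothesis eps0 : 0 < eps.

Let Ve (x : R) := A * (1 - E x) + eps * ((m / r) * (1 - E x) + x).
Let V1 (x : R) := A * (L * E x) + eps * ((m / r) * (L * E x) + 1).
Let V2 (x : R) := A * (L * (- L * E x)) + eps * ((m / r) * (L * (- L * E x))).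

Lemma Ve_V0 (x : R) : Ve x = V0 m sigma r cbar x + eps * ((m / r) * (1 - E x) + x).
Proof. by []. Qed.

Lemma der_Ve (x : R) : is_derive x 1 Ve (V1 x).
Proof.
have hE := der_Ex L x.
have h1 : is_derive x 1 (fun y => 1 - E y) (0 - (- L * E x)) := dB (dC 1 x) hE.
have := dD (dZ A h1) (dZ eps (dD (dZ (m / r) h1) (dI x))).
by rewrite /Ve /V1 sub0r mulNr opprK.
Qed.

Lemma der_V1 (x : R) : is_derive x 1 V1 (V2 x).
Proof.
have hE := der_Ex L x.
have h1 : is_derive x 1 (fun y => L * E y) (L * (- L * E x)) := dZ L hE.
have := dD (dZ A h1) (dZ eps (dD (dZ (m / r) h1) (dC 1 x))).
by rewrite /V1 /V2 addr0.
Qed.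

Lemma V1_ge0 (x : R) : 0 <= V1 x.
Proof.
have E0 : 0 < E x by exact: Ex_gt0.
have L0 : 0 < L by have := L_ge1; lra.
have mr := mr_gt0.
rewrite /V1; apply: addr_ge0; first by apply: mulr_ge0; [exact: ltW A_gt0| apply: mulr_ge0; lra].
apply: mulr_ge0; first exact: ltW eps0.
apply: addr_ge0 => //; apply: mulr_ge0; first exact: ltW.
by apply: mulr_ge0; lra.
Qed.

Lemma super (x : R) : 0 <= x -> S * V2 x <= r * Ve x - m * V1 x - c * op_T b V1 x.
Proof.
move=> x0.
have key : r * Ve x - m * V1 x - S * V2 x =
    r * A + eps * r * x + E x * (A + eps * (m / r)) * (S * L ^+ 2 - m * L - r).
  by rewrite /Ve /V1 /V2; field; apply: lt0r_neq0.
have T1 := opT_pos_le1 (V1_ge0 x).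
have E0 : 0 < E x by exact: Ex_gt0.
have mr := mr_gt0.
have t1 : 0 <= E x * (A + eps * (m / r)) * (S * L ^+ 2 - m * L - r).
  apply: mulr_ge0; last exact: kappa_ge0.
  apply: mulr_ge0; first exact: ltW.
  have := A_gt0; have : 0 < eps * (m / r) by apply: mulr_gt0.
  lra.
have t2 : 0 <= eps * r * x by apply: mulr_ge0 => //; apply: mulr_ge0; [exact: ltW eps0 | exact: ltW r0].
have t3 : c * op_T b V1 x <= c.
  have : c * op_T b V1 x <= c * 1 by apply: ler_wpM2l.
  lra.
have := rA; have := ccb; lra.
Qed.


Lemma Ve_ge (y : R) : 0 <= y -> eps * y <= Ve y.
Proof.
move=> y0; have := Ex_le1 y0; rewrite /Ve => E1.
have t1 : 0 <= A * (1 - E y) by apply: mulr_ge0; [exact: ltW A_gt0 | lra].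
have t2 : 0 <= eps * ((m / r) * (1 - E y)).
  by apply: mulr_ge0; [exact: ltW eps0 | apply: mulr_ge0; [exact: ltW mr_gt0 | lra]].
rewrite mulrDr; lra.
Qed.

Lemma Ve_geV0 (y : R) : 0 <= y -> V0 m sigma r cbar y <= Ve y.
Proof.
move=> y0; have := Ex_le1 y0; rewrite Ve_V0 => E1.
have : 0 <= eps * ((m / r) * (1 - E y) + y).
  apply: mulr_ge0; [exact: ltW eps0 | apply: addr_ge0 => //].
  by apply: mulr_ge0; [exact: ltW mr_gt0 | lra].
lra.
Qed.

Lemma V1_cont (x : R) : {for x, continuous V1}.
Proof.
have [d _] := der_V1 x.
by apply/differentiable_continuous; rewrite -derivable1_diffP.
Qed.

Lemma V2_cont (x : R) : {for x, continuous V2}.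
Proof.
have cE := @cont_Ex R L x.
have c1 : {for x, continuous (fun y => L * (- L * E y))}.
  by apply: continuousM; [exact: cvg_cst | apply: continuousM; [exact: cvg_cst | exact: cE]].
apply: continuousD; first by apply: continuousM; [exact: cvg_cst | exact: c1].
apply: continuousM; first exact: cvg_cst.
by apply: continuousM; [exact: cvg_cst | exact: c1].
Qed.

Lemma f_le_Ve (x1 : R) : 0 <= x1 -> f x1 <= Ve x1.
Proof.
move=> x10; rewrite leNgt; apply/negP => fx.
have [B HB] := Hfb.
pose X := Num.max x1 (B / eps) + 1.
have Xx1 : x1 < X by rewrite /X; have := le_max x1 x1 (B / eps); rewrite lexx /=; lra.
have XB : B / eps < X.
  by rewrite /X; have := le_max (B / eps) x1 (B / eps); rewrite lexx orbT /=; lra.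
have X0 : 0 < X by lra.
pose u y := f y - Ve y.
have big : forall y, X <= y -> u y < 0.
  move=> y Xy; rewrite /u.
  have y0 : 0 <= y by lra.
  have := HB y y0; have := Ve_ge y0.
  have : B < eps * y.
    by rewrite -ltr_pdivrMl //; lra.
  lra.
have wcu : {within `[0, X], continuous u}.
  apply: wc_B => //; first exact: Hfc.
  by apply: wc_of_der => y _; exact: der_Ve.
have [c1 c1i c1m] := EVT_max (ltW X0) wcu.
move: c1i; rewrite in_itv /= => /andP[c10 c1X].
have uc1 : u x1 <= u c1 by apply: c1m; rewrite in_itv /=; apply/andP; split; lra.
have u0 : u 0 = 0.
  by rewrite /u Hf0 /Ve E0; ring.
have c1p : 0 < c1.
  rewrite lt_neqAle c10 andbT; apply/eqP => e; rewrite -e u0 in uc1.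
  by move: fx uc1; rewrite /u; lra.
have glob : forall y, 0 <= y -> u y <= u c1.
  move=> y y0; have [yX|yX] := lerP y X.
    by apply: c1m; rewrite in_itv /=; apply/andP; split.
  have := big y (ltW yX); move: fx uc1; rewrite /u; lra.
have gf : g c1 < f c1.
  have := HgV c10; have := Ve_geV0 c10; move: fx uc1; rewrite /u; lra.
have [d1 [d10 d1c1 Dp]] := inC_nbhs c1p gf.
have Du : forall y : R, 0 < y -> is_derive y 1 u (p y - V1 y).
  by move=> y y0; exact: dB (Hf' y0) (der_Ve y).
have pV : p c1 = V1 c1.
  suff : - (p c1 - V1 c1) = 0 by lra.
  apply: (@fermat_min R (fun y => - u y) (fun y => - (p y - V1 y)) c1 c1 c1p).
  - move=> y yc; apply: dN; apply: Du.
    by move: yc; rewrite ltr_norml => /andP[]; lra.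
  - by apply: continuousN; apply: continuousB; [exact: ppt | exact: V1_cont].
  - move=> y yc; have y0 : 0 <= y by move: yc; rewrite ltr_norml => /andP[]; lra.
    have := glob y y0; lra.
have Du' : forall y : R, `|y - c1| < d1 -> is_derive y 1 (fun y => p y - V1 y) (h y - V2 y).
  by move=> y yc; exact: dB (Dp y yc).1 (der_V1 y).
have Cu' : {for c1, continuous (fun y => h y - V2 y)}.
  by apply: continuousB; [exact: hpt | exact: V2_cont].
have pos : 0 < h c1 - V2 c1.
  have S0 : 0 < S by exact: s2_gt0.
  have Sh : S * h c1 = r * f c1 - m * p c1 - c * op_T b p c1.
    by rewrite /hh mulrA mulfV ?mul1r //; apply: lt0r_neq0.
  have sup := super c10.
  rewrite (opT_eq (q2 := V1) pV) pV in Sh.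
  have rf : 0 < r * (f c1 - Ve c1).
    by apply: mulr_gt0 => //; move: fx uc1; rewrite /u; lra.
  have : 0 < S * (h c1 - V2 c1) by rewrite mulrBr; rewrite mulrBr in rf; lra.
  by rewrite pmulr_rgt0.
have [e [e0 He _]] := loc_pos d10 Du' Cu' pos.
pose e' := Num.min e d1.
have e'0 : 0 < e' by rewrite /e' lt_min e0 d10.
have e'e : e' <= e by rewrite /e' ge_min lexx.
have e20 : c1 < c1 + e' / 2 by lra.
have := @mvt_gt R u (fun y => p y - V1 y) c1 (c1 + e' / 2) 0 e20.
rewrite mul0r addr0 => Hm.
have : u c1 < u (c1 + e' / 2).
  apply: Hm.
  - by move=> y /andP[h1 h2]; apply: Du; lra.
  - by apply: wc_of_der => y /andP[h1 h2]; apply: Du; lra.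
  - move=> y /andP[h1 h2]; have := He y ltac:(apply/andP; split; lra).
    by rewrite pV subrr.
have := glob (c1 + e' / 2) ltac:(lra); lra.
Qed.

End Eps.

Lemma f_le_V0 (x : R) : 0 <= x -> f x <= V0 m sigma r cbar x.
Proof.
move=> x0; apply/ler_addgt0Pr => e e0.
pose W := (m / r) * (1 - E x) + x.
have W0 : 0 <= W.
  have := Ex_le1 x0; rewrite /W => E1.
  by apply: addr_ge0 => //; apply: mulr_ge0; [exact: ltW mr_gt0 | lra].
pose eps := e / (W + 1).
have eps0 : 0 < eps by rewrite /eps divr_gt0 //; lra.
have := f_le_Ve eps0 x0; rewrite Ve_V0 -/W.
have : eps * W <= e.
  have -> : e = eps * (W + 1) by rewrite /eps; field; lra.
  by rewrite ler_wpM2l //; [exact: ltW | lra].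
lra.
Qed.

Lemma V0_le (y : R) : 0 <= y -> V0 m sigma r cbar y <= A * L * y.
Proof.
move=> y0; rewrite /V0 -/L -/A -/E -mulrA; apply: ler_wpM2l; first exact: ltW A_gt0.
have := expR_ge1Dx (- (L * y)); rewrite /E /Ex; lra.
Qed.

Lemma V0_lt (y : R) : r * V0 m sigma r cbar y < cbar.
Proof.
rewrite /V0 -/L -/A -/E.
have E0' : 0 < E y by exact: Ex_gt0.
have : r * (A * (1 - E y)) = r * A - r * A * E y by ring.
have : 0 < r * A * E y by apply: mulr_gt0 => //; apply: mulr_gt0 => //; exact: A_gt0.
have := rA; lra.
Qed.

Lemma p0_le : p 0 <= A * L.
Proof.
rewrite leNgt; apply/negP => p0n.
have cN : (fun y => - p y) @ 0^'+ --> - p 0 by apply: cvgN; exact: right0.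
have [d d0 H] := right_extract (L := - (A * L)) cN ltac:(rewrite ltrN2; exact: p0n).
have d20 : 0 < d / 2 by rewrite divr_gt0.
have := @mvt_gt R f p 0 (d / 2) (A * L) d20.
rewrite Hf0 add0r subr0 => Hm.
have : A * L * (d / 2) < f (d / 2).
  apply: Hm.
  - by move=> x /andP[x0 _]; exact: Hf' x0.
  - exact: Hfc.
  - move=> x /andP[x0 xd]; have := H x ltac:(apply/andP; split; lra); lra.
have := f_le_V0 (ltW d20); have := V0_le (ltW d20); lra.
Qed.

Lemma KK_ge1 : 1 <= KK m sigma r cbar.
Proof. by rewrite /KK le_max lexx. Qed.

Lemma KK_geAL : A * L <= KK m sigma r cbar.
Proof. by rewrite /KK le_max lexx orbT. Qed.

Lemma p_le_K (y : R) : 0 <= y -> p y <= KK m sigma r cbar.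
Proof.
move=> y0; rewrite leNgt; apply/negP => py.
have K1 := KK_ge1; have KA := KK_geAL; have P0 := p0_le.
have y0' : 0 < y.
  rewrite lt_neqAle y0 andbT; apply/eqP => e; rewrite -e in py; lra.
have [z zi zm] := EVT_max (ltW y0') (Hpc y0').
move: zi; rewrite in_itv /= => /andP[z0 zy].
have pz : p y <= p z by apply: zm; rewrite in_itv /=; apply/andP; split; lra.
have zp : 0 < z.
  rewrite lt_neqAle z0 andbT; apply/eqP => e; rewrite -e in pz; lra.
have gf : g z < f z.
  rewrite lt_neqAle f_ge_g ?z0 // andbT; apply/eqP => e.
  have := contact zp (esym e); have := Hdg zp; lra.
have [d1 [d10 d1z Dp]] := inC_nbhs zp gf.
have hz : h z < 0.
  have S0 : 0 < S by exact: s2_gt0.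
  have Sh : S * h z = r * f z - m * p z - c * op_T b p z.
    by rewrite /hh mulrA mulfV ?mul1r //; apply: lt0r_neq0.
  rewrite opT_ge1 in Sh; last lra.
  have rf : r * f z <= r * V0 m sigma r cbar z.
    by rewrite ler_wpM2l //; [exact: ltW | exact: f_le_V0].
  have V0l := V0_lt z.
  have cb : c * b <= c by rewrite ler_piMr.
  have e2 : 0 <= (m - c * b) * (p z - 1).
    apply: mulr_ge0; last lra.
    by have := ccb; have := cbm; lra.
  have : S * h z < 0.
    rewrite Sh.
    have -> : r * f z - m * p z - c * (b * (1 - p z)) =
      r * f z - m - (m - c * b) * (p z - 1) - c * b + c * b by ring.
    have := cbm; lra.
  by rewrite pmulr_rlt0.
have [e [e0 _ He]] := loc_neg d10 (fun t ht => (Dp t ht).1) (hpt zp) hz.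
pose e' := Num.min e z.
have e'0 : 0 < e' by rewrite /e' lt_min e0 zp.
have e'e : e' <= e by rewrite /e' ge_min lexx.
have e'z : e' <= z by rewrite /e' ge_min lexx orbT.
have := He (z - e' / 2) ltac:(apply/andP; split; lra).
have := zm (z - e' / 2) ltac:(rewrite in_itv /=; apply/andP; split; lra).
lra.
Qed.

Theorem core (x : R) : 0 <= x ->
  [/\ 0 <= f x, f x <= V0 m sigma r cbar x & 0 <= p x <= KK m sigma r cbar].
Proof.
move=> x0; split; [exact: f_ge0 | exact: f_le_V0 |].
by rewrite p_ge0 // p_le_K.
Qed.

End Main.


Section Meas.
Variable R : realType.
Local Notation mu := (@lebesgue_measure R).

Lemma wc_addc (k : R -> R) (a u v : R) : u < v ->
  {within `[u, v], continuous k} -> {within `[u, v], continuous (fun y => a + k y)}.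
Proof.
move=> uv /(continuous_within_itvP _ uv)[a1 a2 a3].
apply/(continuous_within_itvP _ uv); split.
- by move=> x xi; apply: continuousD; [exact: cvg_cst | exact: a1].
- by apply: cvgD => //; exact: cvg_cst.
- by apply: cvgD => //; exact: cvg_cst.
Qed.

Lemma int_cont (F k : R -> R) (a0 : R) :
  (forall x : R, 0 <= x -> mu.-integrable `[0, x] (fun t => (k t)%:E)) ->
  (forall x : R, 0 <= x -> F x = a0 + Rintegral mu `[0, x] k) ->
  forall B : R, 0 < B -> {within `[0, B], continuous F}.
Proof.
move=> ki e B B0.
have := @parameterized_integral_continuous R 0 B k (ltW B0) (ki _ (ltW B0)).
move=> /(wc_addc (a := a0) B0) H.
apply: (subspace_eq_continuous _ H) => x; rewrite inE /= in_itv /= => /andP[x0 _].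
change (a0 + parameterized_integral mu 0 x k = F x); rewrite (e x x0) /parameterized_integral.
exact: erefl.
Qed.

Lemma int_der (F k : R -> R) (a0 : R) :
  (forall x : R, 0 <= x -> mu.-integrable `[0, x] (fun t => (k t)%:E)) ->
  (forall x : R, 0 <= x -> F x = a0 + Rintegral mu `[0, x] k) ->
  forall x : R, 0 < x -> {for x, continuous k} -> is_derive x 1 F (k x).
Proof.
move=> ki e x x0 kc.
have x1 : x < x + 1 by lra.
have x10 : 0 <= x + 1 by lra.
have I := ki (x + 1) x10.
have FT := @continuous_FTC1_closed R k 0 x (x + 1) x1.
have FT2 := FT I.
have [H1 H2] := FT2 x0 kc.
set G := (fun y => Rintegral mu `[0, y] k).
have dG : is_derive x 1 G (k x).
  have := derivableP H1; rewrite -derive1E H2; apply.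
have := dD (dC a0 x) dG; rewrite add0r => D.
apply: near_eq_is_derive D.
by apply: filterS (lt_nbhsr x0) => y y0; rewrite e ?(ltW y0).
Qed.


Lemma ae_itv (P : R -> Prop) (u v : R) : u < v -> {ae mu, forall x, P x} ->
  exists y, u < y < v /\ P y.
Proof.
move=> uv [A [mA A0 sub]]; apply: contrapT => nex.
have sA : `]u, v[%classic `<=` A.
  move=> y yi; have yi' : u < y < v by move: yi; rewrite /= in_itv /=.
  apply: sub => /= Py; apply: nex; exists y; split => //.
have := @le_measure _ _ _ mu `]u, v[%classic A ltac:(rewrite inE; exact: measurable_itv) ltac:(by rewrite inE) sA.
move=> H.
have H2 : (mu `]u, v[%classic <= 0)%E.
  by apply: (le_trans H); rewrite le_eqVlt; apply/orP; left; apply/eqP; exact: A0.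
have : mu `]u, v[%classic = 0 by apply/eqP; rewrite eq_le H2 measure_ge0.
by rewrite lebesgue_measure_itv /= lte_fin uv => /eqP; rewrite -EFinD eqe subr_eq0 => /eqP e; move: uv; rewrite e ltxx.
Qed.

Lemma der_from_ae (P w hf : R -> R) (p0 u v : R) :
  (forall x : R, 0 <= x -> mu.-integrable `[0, x] (fun t => (w t)%:E)) ->
  (forall x : R, 0 <= x -> P x = p0 + Rintegral mu `[0, x] w) ->
  0 <= u -> u < v ->
  (forall x, u < x < v -> {for x, continuous hf}) ->
  {ae mu, forall x, u < x < v -> w x = hf x} ->
  forall y, u < y < v -> is_derive y 1 P (hf y).
Proof.
move=> wi e u0 uv hc ae y0 /andP[uy yv].
pose al := (u + y0) / 2; pose be := (y0 + v) / 2.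
have ual : u < al by rewrite /al; lra.
have aly : al < y0 by rewrite /al; lra.
have ybe : y0 < be by rewrite /be; lra.
have bev : be < v by rewrite /be; lra.
have hcin : {in `[al, be]%classic, continuous hf}.
  by move=> x; rewrite inE /= in_itv /= => /andP[h1 h2]; apply: hc; apply/andP; split; lra.
have hI : mu.-integrable `[al, be] (EFin \o hf).
  apply: continuous_compact_integrable; first exact: segment_compact.
  exact: continuous_in_subspaceT hcin.
have key : forall t, al <= t <= be -> P t = P al + Rintegral mu `[al, t] hf.
  move=> t /andP[alt tbe].
  have t0 : 0 <= t by lra.
  have al0 : 0 <= al by lra.
  have wt := wi t t0.
  have E1 : Rintegral mu `[0, t] w - Rintegral mu `[0, al] w = Rintegral mu `]al, t] w.
    by apply: Rintegral_itvB => //; rewrite bnd_simp.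
  have wI : mu.-integrable `]al, t] (EFin \o w).
    by apply: integrableS wt => //; apply: subset_itvr; rewrite bnd_simp.
  have E2 : Rintegral mu `]al, t] w = Rintegral mu `[al, t] w.
    exact: Rintegral_itv_obnd_cbnd.
  have wI2 : mu.-integrable `[al, t] (EFin \o w).
    by apply: integrableS wt => //; apply: subset_itvr; rewrite bnd_simp.
  have hI2 : mu.-integrable `[al, t] (EFin \o hf).
    by apply: integrableS hI => //; apply: subset_itvl; rewrite bnd_simp.
  have E3 : Rintegral mu `[al, t] w = Rintegral mu `[al, t] hf.
    rewrite /Rintegral; congr fine.
    apply: ae_eq_integral => //.
    - exact: measurable_int wI2.
    - exact: measurable_int hI2.
    - move: (ae); apply: filterS; first exact: (ae_filter_ringOfSetsType mu).
      move=> x H /= xi; congr EFin; apply: H.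
      by move: xi; rewrite /= in_itv /= => /andP[h1 h2]; apply/andP; split; lra.
  rewrite (e t t0) (e al al0) -E3 -E2 -E1; ring.
have x1 : y0 < be := ybe.
have [H1 H2] := @continuous_FTC1_closed R hf al y0 be x1 hI aly (hc y0 ltac:(by apply/andP)).
set G := (fun t => Rintegral mu `[al, t] hf).
have dG : is_derive y0 1 G (hf y0).
  have := derivableP H1; rewrite -derive1E H2; apply.
have := dD (dC (P al) y0) dG; rewrite add0r => D.
apply: near_eq_is_derive D.
apply/nbhs_normP; exists (Num.min (y0 - al) (be - y0)) => /=.
  by rewrite lt_min !subr_gt0 aly ybe.
move=> t; rewrite /ball_ /= lt_min => /andP[h1 h2].
have ht : al <= t <= be.
  move: h1 h2; rewrite !ltr_norml => /andP[h1 h1'] /andP[h2 h2'].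
  apply/andP; split; lra.
by rewrite (key t ht).
Qed.

End Meas.

Section Final.
Variable R : realType.
Local Notation mu := (@lebesgue_measure R).

Lemma W2_reg (v d w : R -> R) : W2loc_repr v d w ->
  [/\ (forall x : R, 0 < x -> is_derive x 1 v (d x)),
      (forall B : R, 0 < B -> {within `[0, B], continuous v}) &
      (forall B : R, 0 < B -> {within `[0, B], continuous d})].
Proof.
move=> [_ [_ H]].
have wi : forall x : R, 0 <= x -> mu.-integrable `[0, x] (fun t => (w t)%:E).
  by move=> x x0; have [] := H x x0.
have di : forall x : R, 0 <= x -> mu.-integrable `[0, x] (fun t => (d t)%:E).
  by move=> x x0; have [_ []] := H x x0.
have ve : forall x : R, 0 <= x -> v x = v 0 + Rintegral mu `[0, x] d.
  by move=> x x0; have [_ [_ []]] := H x x0.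
have de : forall x : R, 0 <= x -> d x = d 0 + Rintegral mu `[0, x] w.
  by move=> x x0; have [_ [_ [_ ]]] := H x x0.
have dc := int_cont wi de.
split => //; last first.
- exact: int_cont di ve.
- move=> x x0; apply: (int_der di ve x0).
  exact: pt_cont dc x x0.
Qed.

Lemma V0_ge0 (m sigma r cbar x : R) : 0 < cbar -> 0 < r -> 0 < sigma -> cbar <= m ->
  0 <= x -> 0 <= V0 m sigma r cbar x.
Proof.
move=> cb0 r0 s0 cbm x0; rewrite /V0; apply: mulr_ge0.
  by rewrite /AA divr_ge0 // ltW.
have : Ex (la m sigma r) x <= 1.
  rewrite /Ex expR_le1 oppr_le0; apply: mulr_ge0 => //.
  rewrite /la; apply: addr_ge0 => //; apply: divr_ge0.
    by apply: addr_ge0; [exact: le_trans (ltW cb0) cbm | exact: ltW].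
  by rewrite /s2; apply: mulr_ge0; [rewrite invr_ge0 | apply: sqr_ge0].
lra.
Qed.

Lemma hh_cont (m sigma r b c : R) (f p : R -> R) (x : R) :
  {for x, continuous f} -> {for x, continuous p} ->
  {for x, continuous (hh m sigma r b c f p)}.
Proof.
move=> fc pc; rewrite /hh.
apply: continuousM; first exact: cvg_cst.
apply: continuousB; first apply: continuousB.
- by apply: continuousM; [exact: cvg_cst | exact: fc].
- by apply: continuousM; [exact: cvg_cst | exact: pc].
- by apply: continuousM; [exact: cvg_cst | apply: opT_cont].
Qed.


Lemma cc_bounds (cbar : R) (n i : nat) : 0 < cbar -> (0 < n)%N -> (i <= n)%N ->
  0 <= cc cbar n i <= cbar.
Proof.
move=> cb0 n0 hi; rewrite /cc.
have nR : 0 < n%:R :> R by rewrite ltr0n.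
have e : n%:R * (cbar / n%:R) = cbar by field; rewrite lt0r_neq0.
have c0 : 0 <= cbar / n%:R by rewrite divr_ge0 // ltW.
have h1 : i%:R * (cbar / n%:R) <= n%:R * (cbar / n%:R).
  by apply: ler_wpM2r => //; rewrite ler_nat.
have h2 : 0 <= i%:R * (cbar / n%:R) by apply: mulr_ge0.
apply/andP; split; lra.
Qed.

Lemma step (m sigma r cbar b : R) (n : nat) (v d w : nat -> R -> R) (i : nat)
  (g dg : R -> R) :
  0 < sigma -> 0 < r -> 0 < cbar -> cbar <= m -> 0 <= b -> b <= 1 ->
  (0 < n)%N -> (i <= n)%N ->
  W2loc_repr (v i) (d i) (w i) ->
  (exists M : R, forall x : R, 0 <= x -> `|v i x| <= M) ->
  v i 0 = 0 ->
  {ae mu, forall x : R, 0 < x ->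
       Num.min (- gen_L m sigma r (v i) (d i) (w i) x
                - cc cbar n i * op_T b (d i) x)
               (v i x - g x) = 0} ->
  (forall x : R, 0 < x -> is_derive x 1 g (dg x)) ->
  (forall B : R, 0 < B -> {within `[0, B], continuous g}) ->
  (forall x : R, 0 < x -> {for x, continuous dg}) ->
  g 0 = 0 ->
  (forall x : R, 0 <= x -> 0 <= g x) ->
  (forall x : R, 0 <= x -> g x <= V0 m sigma r cbar x) ->
  (forall x : R, 0 < x -> 0 <= dg x <= KK m sigma r cbar) ->
  forall x : R, 0 <= x ->
  [/\ 0 <= v i x, v i x <= V0 m sigma r cbar x & 0 <= d i x <= KK m sigma r cbar].
Proof.
move=> s0 r0 cb0 cbm b0 b1 n0 hi W2 [M HM] v0 aeC Hg' Hgc Hdgc Hg0 Hgpos HgV Hdg x x0.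
have /andP[c0 ccb] := cc_bounds cb0 n0 hi.
have [rd rv rdd] := W2_reg W2.
have W2' := W2; move: W2' => [_ [_ H]].
have wi : forall x : R, 0 <= x -> mu.-integrable `[0, x] (fun t => (w i t)%:E).
  by move=> y y0; have [] := H y y0.
have de : forall x : R, 0 <= x -> d i x = d i 0 + Rintegral mu `[0, x] (w i).
  by move=> y y0; have [_ [_ [_ ]]] := H y y0.
have Hfb : exists B : R, forall x : R, 0 <= x -> v i x <= B.
  by exists M => y y0; apply: le_trans (ler_norm _) (HM y y0).
have HnoNeg : forall u v' : R, 0 <= u -> u < v' ->
    (forall y, u < y < v' -> v i y < g y) -> False.
  move=> u v' u0 uv Hl.
  have [y [/andP[uy yv] Py]] := ae_itv uv aeC.
  have y0 : 0 < y by lra.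
  have := Py y0 => hm.
  have : 0 <= Num.min (- gen_L m sigma r (v i) (d i) (w i) y
                - cc cbar n i * op_T b (d i) y) (v i y - g y) by rewrite hm.
  rewrite le_min => /andP[_ h2].
  have := Hl y ltac:(by apply/andP); lra.
have HC : forall u v' : R, 0 <= u -> u < v' ->
    (forall y, u < y < v' -> g y < v i y) ->
    forall y, u < y < v' -> is_derive y 1 (d i) (hh m sigma r b (cc cbar n i) (v i) (d i) y).
  move=> u v' u0 uv Hl y yi.
  apply: (der_from_ae wi de u0 uv _ _ yi).
  - move=> z /andP[uz zv]; have z0 : 0 < z by lra.
    by apply: hh_cont; [exact: (pt_cont rv z0) | exact: (pt_cont rdd z0)].
  - move: (aeC); apply: filterS; first exact: (ae_filter_ringOfSetsType mu).
    move=> z Hz /andP[uz zv]; have z0 : 0 < z by lra.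
    have hm := Hz z0.
    have B0 : 0 < v i z - g z by have := Hl z ltac:(by apply/andP); lra.
    set Aq := (- gen_L m sigma r (v i) (d i) (w i) z - cc cbar n i * op_T b (d i) z) in hm.
    have A0 : Aq = 0.
      have [hAB|hAB] := lerP Aq (v i z - g z).
        by rewrite min_l in hm.
      by rewrite min_r in hm; [lra | exact: ltW].
    move: A0; rewrite /Aq /gen_L => A0.
    have e : r * v i z - m * d i z - cc cbar n i * op_T b (d i) z =
             2^-1 * sigma ^+ 2 * w i z by lra.
    rewrite /hh /s2 e mulrA mulVf ?mul1r //.
    by rewrite mulf_neq0 // ?invr_eq0 // expf_neq0 // lt0r_neq0.
exact: (@core R m sigma r cbar b (cc cbar n i) s0 r0 cb0 cbm b0 b1 c0 ccb
  (v i) (d i) g dg rd rv rdd v0 Hfb Hg' Hgc Hdgc Hg0 Hgpos HgV Hdg HnoNeg HC x x0).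
Qed.

End Final.

Theorem lemma5p8 (R : realType) (m sigma r cbar b : R) :
  0 < sigma -> 0 < r -> 0 < cbar -> cbar <= m -> 0 <= b -> b <= 1 ->
  sigma ^+ 2 * r < 2 * m * cbar ->
  exists K : R, 0 < K /\
    forall (n : nat) (v d w : nat -> R -> R),
      (0 < n)%N ->
      solves_system m sigma r cbar b n v d w ->
      forall i : nat, (i <= n)%N ->
        forall x : R, 0 <= x -> 0 <= d i x <= K.
Proof.
move=> s0 r0 cb0 cbm b0 b1 _.
exists (KK m sigma r cbar); split.
  by apply: (lt_le_trans ltr01); exact: KK_ge1.
move=> n v d w n0 sol.
suff H : forall i, (i <= n)%N -> forall x : R, 0 <= x ->
    [/\ 0 <= v i x, v i x <= V0 m sigma r cbar x & 0 <= d i x <= KK m sigma r cbar].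
  by move=> i hi x x0; have [] := H i hi x x0.
elim => [|k IH] hi x x0.
- have [W2 [HM [v0 aeC]]] := sol 0%N hi.
  apply: (step (g := vprev v 0) (dg := vprev d 0) s0 r0 cb0 cbm b0 b1 n0 hi W2 HM v0 aeC) => //=.
  + move=> B _; apply: continuous_subspaceT => y; exact: cvg_cst.
  + by move=> y _; exact: cvg_cst.
  + by move=> y y0; exact: V0_ge0.
  + by move=> y _; rewrite lexx /= le_eqVlt (lt_le_trans ltr01 (KK_ge1 _ _ _ _)) orbT.
- have hk : (k <= n)%N by apply: leq_trans hi.
  have [W2 [HM [v0 aeC]]] := sol k.+1 hi.
  have [W2k [_ [vk0 _]]] := sol k hk.
  have [rdk rvk rddk] := W2_reg W2k.
  apply: (step (g := vprev v k.+1) (dg := vprev d k.+1) s0 r0 cb0 cbm b0 b1 n0 hi W2 HM v0 aeC) => //=.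
  + by move=> y y0; exact: (pt_cont rddk y0).
  + by move=> y y0; have [] := IH hk y y0.
  + by move=> y y0; have [] := IH hk y y0.
  + by move=> y y0; have [_ _] := IH hk y (ltW y0).
Qed.
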